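(* Let $G=(V,E)$ be a finite connected undirected unweighted graph, let $\lambda\in[0,1]$, and consider the $\lambda$-mixed Moran process on $G$ with mutant fitness $r=1$. Then for every $S\subseteq V$, \[\mathrm{fp}^{\lambda,1}_G(S)=\sum_{u\in S}\mathrm{fp}^{\lambda,1}_G(\{u\}).\]
   Context: The $\lambda$-mixed Moran process on a connected graph $G=(V,E)$ with $n=|V|\ge 2$ vertices: each vertex hosts either a resident (fitness $1$) or a mutant (fitness $r>0$); the state (configuration) is the set $S_t\subseteq V$ of mutant vertices. $N(u)$ is the neighbor set of $u$, $\deg_u=|N(u)|$. At each discrete step, independently: with probability $\lambda$ a Birth-death (Bd) step occurs, in which a vertex $u$ is chosen with probability proportional to its fitness (among all $n$ vertices), then a uniformly random neighbor $v\in N(u)$ is replaced by an offspring of the type of $u$; with probability $1-\lambda$ a death-Birth (dB) step occurs, in which a vertex $v$ is chosen uniformly at random to die, then a neighbor $u\in N(v)$ is chosen with probability proportional to fitness (among $N(v)$) and $v$ takes the type of $u$. The process is absorbed when $S_t=\emptyset$ (extinction) or $S_t=V$ (fixation). $\mathrm{fp}^{\lambda,r}_G(S)$ denotes the probability that the process started from $S_0=S$ reaches $S_t=V$ at some time. *)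

(* Defs.v *)
From HB Require Import structures.
From mathcomp Require Import all_boot all_order all_algebra.
From mathcomp Require Import reals topology normedtype sequences.
Set Implicit Arguments. Unset Strict Implicit. Unset Printing Implicit Defensive.
Import Order.TTheory GRing.Theory Num.Theory numFieldNormedType.Exports.
Local Open Scope ring_scope.

(* A graph is a relation adj on a finite vertex type V (assumed symmetric,
   irreflexive and connected in the theorem).  States are sets S : {set V}
   of mutant vertices. *)

Section Moran.
Variables (R : realType) (V : finType) (adj : rel V).

Definition nbr (u : V) : {set V} := [set v | adj u v].
Definition deg (u : V) : nat := #|nbr u|.

Definition fit (r : R) (S : {set V}) (x : V) : R := if x \in S then r else 1.

Definition repl (S : {set V}) (u v : V) : {set V} :=
  if u \in S then v |: S else S :\ v.

(* Birth-death step: u chosen prop. to fitness among all n vertices,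
   v uniform among N(u), v replaced by offspring of u. *)
Definition bd_prob (r : R) (S T : {set V}) : R :=
  \sum_(u : V) \sum_(v in nbr u)
     (fit r S u / (\sum_(x : V) fit r S x)) * (deg u)%:R^-1
     * (repl S u v == T)%:R.

(* death-Birth step: v uniform among all n vertices dies, u chosen among
   N(v) prop. to fitness, v takes the type of u. *)
Definition db_prob (r : R) (S T : {set V}) : R :=
  \sum_(v : V) \sum_(u in nbr v)
     (#|V|%:R)^-1 * (fit r S u / (\sum_(w in nbr v) fit r S w))
     * (repl S u v == T)%:R.

Definition trans (lam r : R) (S T : {set V}) : R :=
  lam * bd_prob r S T + (1 - lam) * db_prob r S T.

Fixpoint hit (lam r : R) (n : nat) (S : {set V}) : R :=
  if S == [set: V] then 1 else
  match n with
  | 0 => 0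
  | n'.+1 => \sum_(T : {set V}) trans lam r S T * hit lam r n' T
  end.

(* fixation probability: probability of reaching S_t = V at some time,
   i.e. the limit of the (nondecreasing, bounded) hitting probabilities *)
Definition fp (lam r : R) (S : {set V}) : R := limn (fun n => hit lam r n S).

End Moran.

(* Main.v *)
Require Import Defs.
From HB Require Import structures.
From mathcomp Require Import boolp classical_sets filter.
From mathcomp Require Import all_boot all_order all_algebra.
From mathcomp Require Import reals topology normedtype sequences.
From mathcomp Require Import ring lra zify.
Import Order.TTheory GRing.Theory Num.Theory numFieldNormedType.Exports.
Local Open Scope ring_scope.
Set Implicit Arguments. Unset Strict Implicit. Unset Printing Implicit Defensive.

Section Proof1.
Variables (R : realType) (V : finType) (adj : rel V).
Hypothesis adj_sym : symmetric adj.
Hypothesis adj_conn : forall x y : V, connect adj x y.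
Hypothesis hn : (2 <= #|V|)%N.
Variable lam : R.
Hypothesis hlam0 : 0 <= lam.
Hypothesis hlam1 : lam <= 1.

Let N : R := (#|V|)%:R.
Let dg (u : V) : R := (deg adj u)%:R.

Definition q (p : V * V) : R :=
  (adj p.1 p.2)%:R * (lam / (N * dg p.1) + (1 - lam) / (N * dg p.2)).

Definition sg (p : V * V) (z : V) : V := if z == p.2 then p.1 else z.

Lemma repl_pre (S : {set V}) u v : repl S u v = sg (u, v) @^-1: S.
Proof.
apply/setP => x; rewrite /repl !inE /sg /=.
case: (eqVneq x v) => [->|xv]; case: ifP => uS; rewrite ?inE ?eqxx ?uS //.
  by rewrite (negbTE xv).
by rewrite (negbTE xv).
Qed.

Lemma sum_adj u (F : V -> R) :
  \sum_v (adj u v)%:R * F v = \sum_(v in nbr adj u) F v.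
Proof.
rewrite [RHS]big_mkcond /=; apply: eq_bigr => v _; rewrite inE.
by case: (adj u v); rewrite ?mul1r ?mul0r.
Qed.

Lemma NP : 0 < N.
Proof. rewrite /N ltr0n; lia. Qed.

Lemma deg_pos u : (0 < deg adj u)%N.
Proof.
have [y yu] : exists y, y != u.
  have /card_gt1P [a [b [_ _ ab]]] : (1 < #|V|)%N by lia.
  case: (eqVneq a u) => [au|au]; last by exists a.
  by exists b; rewrite -au eq_sym.
have /connectP [p pth ylast] := adj_conn u y.
case: p pth ylast => [|z p] /= pth ylast; first by rewrite ylast eqxx in yu.
move/andP: pth => [uz _].
rewrite /deg card_gt0; apply/set0Pn; exists z; by rewrite inE.
Qed.

Lemma dgP u : 0 < dg u.
Proof. by rewrite /dg ltr0n deg_pos. Qed.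

Lemma dg_le u : dg u <= N.
Proof. by rewrite /dg /N ler_nat /deg max_card. Qed.

Lemma q_ge0 p : 0 <= q p.
Proof.
rewrite /q; apply: mulr_ge0 => //; apply: addr_ge0; apply: divr_ge0 => //;
  try (apply: mulr_ge0; apply: ltW; [exact: NP| exact: dgP]).
by rewrite subr_ge0.
Qed.

Lemma q_sum1 : \sum_p q p = 1.
Proof.
rewrite -(pair_big xpredT xpredT (fun u v => q (u, v))) /=.
rewrite /q /=.
under eq_bigr => u _ do under eq_bigr => v _ do rewrite mulrDr.
under eq_bigr => u _ do rewrite big_split /=.
rewrite big_split /=.
rewrite [X in _ + X = _]exchange_big /=.
have H : forall c u, \sum_v (adj u v)%:R * (c / (N * dg u)) = c / N.
  move=> c u; rewrite sum_adj sumr_const -mulr_natr -/(deg adj u) -/(dg u).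
  rewrite invfM mulrA divfK //; exact: lt0r_neq0 (dgP u).
rewrite (eq_bigr (fun _ => lam / N)); last by move=> u _; rewrite H.
have H2 : forall v, \sum_u (adj u v)%:R * ((1 - lam) / (N * dg v)) = (1 - lam) / N.
  by move=> v; rewrite -(H _ v); apply: eq_bigr => u _; rewrite adj_sym.
under [X in _ + X = _]eq_bigr => v _ do rewrite H2.
rewrite !sumr_const -mulrnDl -mulrDl addrC subrK mul1r -mulr_natr.
by rewrite mulVf //; exact: lt0r_neq0 NP.
Qed.

Lemma fit1 (S : {set V}) x : fit (1 : R) S x = 1.
Proof. by rewrite /fit if_same. Qed.

Lemma trans1 (S T : {set V}) :
  trans adj lam 1 S T = \sum_p q p * (repl S p.1 p.2 == T)%:R.
Proof.
have sf : \sum_x fit (1 : R) S x = N.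
  by rewrite (eq_bigr (fun _ => 1)) ?sumr_const // => x _; rewrite fit1.
have sfn : forall v, \sum_(w in nbr adj v) fit (1 : R) S w = dg v.
  by move=> v; rewrite (eq_bigr (fun _ => 1)) ?sumr_const // => x _; rewrite fit1.
have A : lam * bd_prob adj 1 S T =
   \sum_u \sum_v (adj u v)%:R * (lam / (N * dg u)) * (repl S u v == T)%:R.
  rewrite /bd_prob mulr_sumr; apply: eq_bigr => u _.
  rewrite -sum_adj mulr_sumr; apply: eq_bigr => v _.
  rewrite fit1 sf invfM /dg; ring.
have B : (1 - lam) * db_prob adj 1 S T =
   \sum_u \sum_v (adj u v)%:R * ((1 - lam) / (N * dg v)) * (repl S u v == T)%:R.
  rewrite /db_prob mulr_sumr.
  rewrite [RHS]exchange_big /=; apply: eq_bigr => v _.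
  rewrite mulr_sumr -sum_adj; apply: eq_bigr => u _.
  rewrite fit1 sfn invfM adj_sym /dg; ring.
rewrite /trans A B -big_split /=.
rewrite -(pair_big xpredT xpredT (fun u v => q (u, v) * (repl S (u, v).1 (u, v).2 == T)%:R)) /=.
apply: eq_bigr => u _; rewrite -big_split /=; apply: eq_bigr => v _.
rewrite /q /=; ring.
Qed.


Lemma sum_trans (S : {set V}) (h : {set V} -> R) :
  \sum_T trans adj lam 1 S T * h T = \sum_p q p * h (repl S p.1 p.2).
Proof.
under eq_bigr => T _ do rewrite trans1 mulr_suml.
rewrite exchange_big /=; apply: eq_bigr => p _.
rewrite (bigD1 (repl S p.1 p.2)) //= eqxx mulr1 big1 ?addr0 // => T /negbTE.
by rewrite eq_sym => ->; rewrite mulr0 mul0r.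
Qed.

Definition Pop (f : {set V} -> R) (B : {set V}) : R :=
  \sum_p q p * f (sg p @: B).

Definition W k (S : {set V}) := iter k Pop (fun B => (B \subset S)%:R).

Lemma W_step k S B :
  W k.+1 S B = \sum_p q p * W k (repl S p.1 p.2) B.
Proof.
elim: k S B => [|k IH] S B.
  rewrite /W /= /Pop; apply: eq_bigr => p _.
  by rewrite repl_pre sub_imset_pre; case: p.
have -> : W k.+2 S B = Pop (W k.+1 S) B by []. rewrite /Pop.
under eq_bigr => p _ do rewrite IH mulr_sumr.
rewrite exchange_big /=; apply: eq_bigr => p' _.
rewrite /Pop mulr_sumr.
by apply: eq_bigr => p _; rewrite mulrCA.
Qed.

Lemma hit_setT k : hit adj lam 1 k [set: V] = 1.
Proof. by case: k => [|k] /=; rewrite eqxx. Qed.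

Lemma hit_step k S :
  hit adj lam 1 k.+1 S = \sum_p q p * hit adj lam 1 k (repl S p.1 p.2).
Proof.
case: (eqVneq S [set: V]) => [->|nS].
  rewrite hit_setT (eq_bigr q) ?q_sum1 // => p _.
  by rewrite /repl in_setT setUT hit_setT mulr1.
by rewrite /= (negbTE nS) sum_trans.
Qed.

Lemma hit_W k S : hit adj lam 1 k S = W k S [set: V].
Proof.
elim: k S => [|k IH] S.
  by rewrite /W /= subTset; case: eqP.
by rewrite hit_step W_step; apply: eq_bigr => p _; rewrite IH.
Qed.


Lemma Pop_mono f g (B : {set V}) :
  (forall p, f (sg p @: B) <= g (sg p @: B)) -> Pop f B <= Pop g B.
Proof. by move=> H; rewrite /Pop; apply: ler_sum => p _; apply: ler_wpM2l; [exact: q_ge0 | exact: H]. Qed.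

Lemma Pop_const c (B : {set V}) : Pop (fun _ => c) B = c.
Proof. by rewrite /Pop -mulr_suml q_sum1 mul1r. Qed.

Lemma iter_mono k f g : (forall B, f B <= g B) ->
  forall B, iter k Pop f B <= iter k Pop g B.
Proof.
move=> H; elim: k => [|k IH] B //=; exact: Pop_mono.
Qed.

Lemma iter_scale k a f (B : {set V}) :
  iter k Pop (fun B => a * f B) B = a * iter k Pop f B.
Proof.
elim: k B => [|k IH] B //=.
rewrite /Pop mulr_sumr; apply: eq_bigr => p _; by rewrite IH mulrCA.
Qed.

Lemma iter_bound k f : (forall B, 0 <= f B <= 1) ->
  forall B, 0 <= iter k Pop f B <= 1.
Proof.
move=> H; elim: k => [|k IH] B //=.
apply/andP; split.
  rewrite /Pop; apply: sumr_ge0 => p _; apply: mulr_ge0 (q_ge0 p) _.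
  by case/andP: (IH (sg p @: B)).
rewrite -[X in _ <= X](Pop_const 1 B); apply: Pop_mono => p.
by case/andP: (IH (sg p @: B)).
Qed.

Definition z0 (B : {set V}) : R := (1 < #|B|)%N%:R.
Definition Z k := iter k Pop z0.

Lemma z0_bound (B : {set V}) : 0 <= z0 B <= 1.
Proof. by rewrite /z0; case: (1 < #|B|)%N; rewrite ?ler01 ?lexx. Qed.

Lemma Z_bound k (B : {set V}) : 0 <= Z k B <= 1.
Proof. exact: iter_bound z0_bound B. Qed.

Lemma Z_small k (B : {set V}) : (#|B| <= 1)%N -> Z k B = 0.
Proof.
elim: k B => [|k IH] B hB /=.
  by rewrite /z0 ltnNge hB.
rewrite /Pop big1 // => p _; rewrite -/(Z k) IH ?mulr0 //.
exact: leq_trans (leq_imset_card _ _) hB.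
Qed.

Lemma Z_dec k (B : {set V}) : Z k.+1 B <= Z k B.
Proof.
elim: k B => [|k IH] B.
  rewrite /Z /= -[X in _ <= X](Pop_const (z0 B) B); apply: Pop_mono => p.
  rewrite /z0; case: (ltnP 1 #|sg p @: B|) => h.
    have h2 : (1 < #|B|)%N by exact: leq_trans h (leq_imset_card _ _).
    by rewrite h2.
  by case: (1 < #|B|)%N.
rewrite /Z iterS; apply: Pop_mono => p; exact: IH.
Qed.

Lemma Z_anti m k (B : {set V}) : (m <= k)%N -> Z k B <= Z m B.
Proof.
move=> /subnK <-; elim: (k - m)%N => [|d IH] //.
by rewrite addSn; apply: le_trans (Z_dec _ _) IH.
Qed.

Lemma deficit k (S B : {set V}) : B != set0 ->
  `|W k S B - \sum_(x in S) W k [set x] B| <= (#|S|.+1)%:R * Z k B.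
Proof.
elim: k B => [|k IH] B hB.
  rewrite /W /Z /= /z0; case: (ltnP 1 #|B|) => hB1.
    rewrite big1; last first.
      move=> x _; case: (boolP (B \subset [set x])) => // sub.
      by have := subset_leq_card sub; rewrite cards1 => h; exfalso; lia.
    rewrite subr0 mulr1; case: (B \subset S); rewrite ?normr1 ?normr0 ?ler1n ?ler0n //.
  have : #|B| == 1%N by rewrite eqn_leq hB1 card_gt0.
  move/cards1P => [y ->].
  under eq_bigr => x _ do rewrite sub1set in_set1.
  rewrite sub1set.
  have -> : \sum_(x in S) (y == x)%:R = (y \in S)%:R :> R.
    case: (boolP (y \in S)) => yS.
      rewrite (bigD1 y) //= eqxx big1 ?addr0 // => x /andP [_ xy].
      by rewrite eq_sym (negbTE xy).
    rewrite big1 // => x xS; case: eqP => // yx; by rewrite yx xS in yS.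
  by rewrite subrr normr0 mulr_ge0.
have -> : W k.+1 S B = Pop (W k S) B by [].
have -> : \sum_(x in S) W k.+1 [set x] B = \sum_(x in S) Pop (W k [set x]) B by [].
rewrite /Pop exchange_big /= -sumrB.
apply: le_trans (ler_norm_sum _ _ _) _.
rewrite /Pop mulr_sumr; apply: ler_sum => p _.
rewrite -mulr_sumr -mulrBr normrM (ger0_norm (q_ge0 p)) mulrCA.
apply: ler_wpM2l; first exact: q_ge0. apply: IH.
by rewrite imset_eq0.
Qed.


Definition comp (s : seq (V * V)) : V -> V := foldr (fun p f => f \o sg p) id s.

Lemma comp_cat s1 s2 x : comp (s1 ++ s2) x = comp s2 (comp s1 x).
Proof. by elim: s1 x => [|p s1 IH] x //=; rewrite -IH. Qed.

Lemma comp_img s1 s2 (B : {set V}) : comp (s1 ++ s2) @: B = comp s2 @: (comp s1 @: B).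
Proof. by rewrite -imset_comp; apply: eq_imset => x; rewrite comp_cat. Qed.

Lemma comp_cons_img p s (B : {set V}) : comp (p :: s) @: B = comp s @: (sg p @: B).
Proof. by rewrite -imset_comp; apply: eq_imset. Qed.

Lemma comp_nil_img (B : {set V}) : comp [::] @: B = B.
Proof.
apply/setP => x; apply/imsetP/idP => [[y yB ->] //| xB]; by exists x.
Qed.

Fixpoint ppairs (x : V) (p : seq V) : seq (V * V) :=
  if p is z :: p' then (z, x) :: ppairs z p' else [::].

Definition adjp (pr : V * V) : bool := adj pr.1 pr.2.

Lemma ppairs_prop x p : path adj x p -> uniq (x :: p) ->
  [/\ comp (ppairs x p) x = last x p, comp (ppairs x p) (last x p) = last x p,
      all adjp (ppairs x p) & size (ppairs x p) = size p].
Proof.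
elim: p x => [|z p IH] x //=.
move=> /andP [xz pth] /andP [xnin un].
have [h1 h2 h3 h4] := IH z pth un.
have lx : last z p != x.
  apply/negP => /eqP e; move: xnin; rewrite -e; by rewrite mem_last.
split.
- by rewrite /sg /= eqxx.
- by rewrite /sg /= (negbTE lx).
- by rewrite h3 /adjp /= adj_sym xz.
- by rewrite h4.
Qed.

Lemma dec_step (B : {set V}) : (1 < #|B|)%N -> exists s,
  [/\ (size s < #|V|)%N, all adjp s & (#|comp s @: B| < #|B|)%N].
Proof.
move/card_gt1P => [x [y [xB yB xy]]].
have /connectP [p pth ey] := adj_conn x y.
rewrite {}ey in yB xy.
case: (shortenP pth) yB xy => p' pth' un _ yB xy.
have [h1 h2 h3 h4] := ppairs_prop pth' un.
exists (ppairs x p'); split => //.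
  rewrite h4; move/card_uniqP: un => hc.
  have := max_card (mem (x :: p')); rewrite hc /=; lia.
rewrite ltn_neqAle leq_imset_card andbT; apply/negP => /imset_injP inj.
have := inj x (last x p') xB yB; rewrite h1 h2 => /(_ erefl) e.
by rewrite -e eqxx in xy.
Qed.

Lemma coal k (B : {set V}) : (#|B| <= k.+1)%N -> exists s,
  [/\ (size s <= #|V| * k)%N, all adjp s & (#|comp s @: B| <= 1)%N].
Proof.
elim: k B => [|k IH] B hB.
  by exists [::]; split => //; rewrite comp_nil_img.
case: (leqP #|B| k.+1) => h.
  have [s [h1 h2 h3]] := IH B h; exists s; split => //.
  exact: leq_trans h1 (leq_mul (leqnn _) (leqnSn k)).
have h1B : (1 < #|B|)%N by lia.
have [s1 [h1 h2 h3]] := dec_step h1B.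
have h' : (#|comp s1 @: B| <= k.+1)%N by lia.
have [s2 [g1 g2 g3]] := IH _ h'.
exists (s1 ++ s2); split.
- rewrite size_cat mulnS; lia.
- by rewrite all_cat h2 g2.
- by rewrite comp_img.
Qed.


Let c0 : R := (N * N)^-1.

Lemma c0_pos : 0 < c0.
Proof. by rewrite /c0 invr_gt0 mulr_gt0 // NP. Qed.

Lemma c0_le1 : c0 <= 1.
Proof.
rewrite /c0 invf_le1; last by rewrite mulr_gt0 // NP.
have h1 : 1 <= N by rewrite /N ler1n; lia.
by rewrite -[1]mulr1 ler_pM.
Qed.

Lemma inv_lb u : c0 <= (N * dg u)^-1.
Proof.
have hN := NP; have hd := dgP u.
rewrite /c0 lef_pV2 ?posrE ?mulr_gt0 //.
by rewrite ler_pM2l // dg_le.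
Qed.

Lemma q_lb p : adjp p -> c0 <= q p.
Proof.
rewrite /adjp /q => ->; rewrite mul1r.
have h1 := inv_lb p.1; have h2 := inv_lb p.2.
have e : c0 = lam * c0 + (1 - lam) * c0 by ring.
rewrite [X in X <= _]e; apply: lerD; apply: ler_wpM2l => //.
by rewrite subr_ge0.
Qed.

Lemma prod_lb s : all adjp s -> c0 ^+ size s <= \prod_(p <- s) q p.
Proof.
elim: s => [|p s IH] /=; first by rewrite big_nil expr0.
move=> /andP [hp hs]; rewrite big_cons exprS.
apply: ler_pM; [exact: ltW c0_pos | exact: exprn_ge0 (ltW c0_pos) | exact: q_lb | exact: IH].
Qed.

Lemma iter_seq s g (B : {set V}) : (forall B, 0 <= g B <= 1) ->
  iter (size s) Pop g B <= 1 - (\prod_(p <- s) q p) * (1 - g (comp s @: B)).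
Proof.
move=> hg; elim: s B => [|p s IH] B.
  rewrite big_nil mul1r /= comp_nil_img; lra.
rewrite /= -/(iter (size s) Pop g).
set G := iter (size s) Pop g.
have bG := iter_bound (size s) hg.
have E : \sum_p' q p' * (1 - G (sg p' @: B)) = 1 - Pop G B.
  under eq_bigr => p' _ do rewrite mulrBr mulr1.
  by rewrite sumrB q_sum1.
have key : q p * (1 - G (sg p @: B)) <= 1 - Pop G B.
  rewrite -E (bigD1 p) //= lerDl; apply: sumr_ge0 => p' _.
  apply: mulr_ge0; first exact: q_ge0.
  by case/andP: (bG (sg p' @: B)) => _; rewrite subr_ge0.
have := IH (sg p @: B); rewrite -comp_cons_img big_cons -/G => hI.
set X := (\prod_(j <- s) q j) * (1 - g (comp (p :: s) @: B)).
have hX : q p * X <= q p * (1 - G (sg p @: B)).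
  apply: ler_wpM2l; first exact: q_ge0.
  rewrite /X; lra.
rewrite -mulrA -/X; lra.
Qed.

Let M := (#|V| * #|V|)%N.
Let e : R := c0 ^+ M.

Lemma e_pos : 0 < e.
Proof. exact: exprn_gt0 c0_pos. Qed.

Lemma e_le1 : e <= 1.
Proof. exact: exprn_ile1 (ltW c0_pos) c0_le1. Qed.

Lemma Z_M (B : {set V}) : Z M B <= (1 - e) * z0 B.
Proof.
case: (leqP #|B| 1) => h.
  by rewrite Z_small // /z0 ltnNge h mulr0.
rewrite /z0 h mulr1.
have hB : (#|B| <= #|V|.+1)%N by apply: leq_trans (max_card _) (leqnSn _).
have [s [hs ha hc]] := coal hB.
apply: le_trans (Z_anti B hs) _.
apply: le_trans (iter_seq s B z0_bound) _.
rewrite /z0 ltnNge hc subr0 mulr1.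
rewrite lerD2l lerN2.
apply: le_trans (prod_lb ha).
by apply: ler_wiXn2l; [exact: ltW c0_pos | exact: c0_le1 | ].
Qed.

Lemma Z_geom k (B : {set V}) : Z (k * M) B <= (1 - e) ^+ k.
Proof.
elim: k B => [|k IH] B.
  by rewrite mul0n expr0; case/andP: (z0_bound B).
rewrite mulSn addnC /Z iterD.
apply: le_trans (iter_mono (k * M) (g := fun B => (1 - e) * z0 B) Z_M B) _.
rewrite iter_scale exprS; apply: ler_wpM2l; last exact: IH.
by rewrite subr_ge0 e_le1.
Qed.


Local Open Scope classical_set_scope.
Lemma Z_to0 : (fun n => Z n [set: V]%SET) @ \oo --> 0.
Proof.
apply/cvgr0Pnorm_lt => eps eps0.
have h1 : `|1 - e| < 1.
  rewrite ger0_norm ?subr_ge0 ?e_le1 //.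
  by rewrite ltrBlDr ltrDl e_pos.
have := cvg_expr h1; move/cvgr0Pnorm_lt => /(_ eps eps0) [k0 _ hk0].
exists (k0 * M)%N => // n /= hn'.
rewrite ger0_norm; last by case/andP: (Z_bound n [set: V]%SET).
apply: le_lt_trans (Z_anti _ hn') _.
apply: le_lt_trans (Z_geom k0 _) _.
apply: le_lt_trans (ler_norm _) _.
by apply: hk0; rewrite /= leqnn.
Qed.


Lemma hit_bound k (S : {set V}) : 0 <= hit adj lam 1 k S <= 1.
Proof.
rewrite hit_W; apply: iter_bound => B.
by case: (B \subset S)%SET; rewrite ?ler01 ?lexx.
Qed.

Lemma hit_mono k (S : {set V}) : hit adj lam 1 k S <= hit adj lam 1 k.+1 S.
Proof.
elim: k S => [|k IH] S.
  case: (eqVneq S [set: V]%SET) => [->|nS]; first by rewrite !hit_setT.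
  have [h _] := andP (hit_bound 1 S); apply: le_trans h.
  by rewrite hit_W /W /= subTset (negbTE nS).
rewrite (hit_step k.+1) hit_step; apply: ler_sum => p _.
by apply: ler_wpM2l; [exact: q_ge0 | exact: IH].
Qed.

Lemma hit_cvg (S : {set V}) : cvgn (fun k => hit adj lam 1 k S).
Proof.
apply: (@near_nondecreasing_is_cvgn _ _ 1); apply: nearW.
  move=> n m /subnK <-; elim: (m - n)%N => [|d IH] //.
  by rewrite addSn; apply: le_trans IH (hit_mono _ _).
by move=> n; case/andP: (hit_bound n S).
Qed.

Lemma cvg_sum_seq (r : seq V) (P : pred V) (u : V -> nat -> R) :
  (forall x, cvgn (u x)) ->
  (fun n => \sum_(x <- r | P x) u x n) @ \oo --> \sum_(x <- r | P x) limn (u x).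
Proof.
move=> Hu; elim: r => [|x r IH].
  rewrite big_nil (_ : (fun n => _) = fun=> 0); first exact: cvg_cst.
  by apply: funext => n; rewrite big_nil.
rewrite big_cons; case: (boolP (P x)) => Px.
  rewrite (_ : (fun n => _) = fun n => u x n + \sum_(y <- r | P y) u y n).
    by apply: cvgD => //; exact: Hu.
  by apply: funext => n; rewrite big_cons Px.
rewrite (_ : (fun n => _) = fun n => \sum_(y <- r | P y) u y n) //.
by apply: funext => n; rewrite big_cons (negbTE Px).
Qed.

Lemma main_sec (S : {set V}) :
  fp adj lam 1 S = \sum_(u in S) fp adj lam 1 [set u]%SET.
Proof.
set a := fun n => hit adj lam 1 n S.
set b := fun x n => hit adj lam 1 n [set x]%SET.
have hT : ([set: V]%SET != set0)%SET.
  by rewrite -card_gt0 cardsT; lia.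
set c : R := (#|S|.+1)%:R.
have c0' : 0 < c by rewrite /c ltr0n.
have d0 : (fun n => a n - \sum_(x in S) b x n) @ \oo --> 0.
  apply/cvgr0Pnorm_lt => eps eps0.
  have := Z_to0; move/cvgr0Pnorm_lt => /(_ (eps / c)) [].
    by rewrite divr_gt0.
  move=> n0 _ hn0; exists n0 => // n /= hn1.
  rewrite /a /b hit_W.
  under eq_bigr => x _ do rewrite hit_W.
  apply: le_lt_trans (deficit n S hT) _.
  have h := hn0 n hn1; move: h => /=; rewrite ger0_norm; last by case/andP: (Z_bound n [set: V]%SET).
  move=> h; rewrite -/c.
  have : c * Z n [set: V]%SET < c * (eps / c) by rewrite ltr_pM2l.
  by rewrite [c * (eps / c)]mulrC divfK // gt_eqF.
have sc := @cvg_sum_seq (index_enum V) (fun x => x \in S) b (fun x => @hit_cvg [set x]%SET).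
have ha : a @ \oo --> 0 + \sum_(x in S) limn (b x).
  rewrite (_ : a = fun n => (a n - \sum_(x in S) b x n) + \sum_(x in S) b x n).
    exact: cvgD.
  by apply: funext => n; rewrite subrK.
rewrite add0r in ha.
have -> : fp adj lam 1 S = limn a by [].
rewrite (cvg_lim _ ha) //.
Qed.

End Proof1.

Theorem mainTheorem1 (R : realType) (V : finType) (adj : rel V)
  (adj_sym : symmetric adj) (adj_irr : irreflexive adj)
  (adj_conn : forall x y : V, connect adj x y)
  (hn : (2 <= #|V|)%N)
  (lam : R) (hlam0 : 0 <= lam) (hlam1 : lam <= 1)
  (S : {set V}) :
  fp adj lam 1 S = \sum_(u in S) fp adj lam 1 [set u].
Proof. exact: (main_sec adj_sym adj_conn hn hlam0 hlam1 S). Qed.
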